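(* Let $K, M, N, d$ be positive integers, $\sigma^2>0$, $P>0$, weights $\omega_1,\ldots,\omega_K>0$, and channel matrices $\boldsymbol{H}_k\in\mathbb{C}^{N\times M}$, $k=1,\ldots,K$. For $\boldsymbol{V}=(\boldsymbol{V}_1,\ldots,\boldsymbol{V}_K)$ with $\boldsymbol{V}_k\in\mathbb{C}^{M\times d}$ and $\sum_{k=1}^K\|\boldsymbol{V}_k\|_F^2>0$, define $$\widetilde{\boldsymbol{F}}_k=\Big(\frac{\sigma^2}{P}\sum_{j=1}^K\|\boldsymbol{V}_j\|_F^2\Big)\boldsymbol{I}+\sum_{j\neq k}\boldsymbol{H}_k\boldsymbol{V}_j\boldsymbol{V}_j^{\mathrm{H}}\boldsymbol{H}_k^{\mathrm{H}}$$ and $$g(\boldsymbol{V})=\sum_{k=1}^K\omega_k\log\left|\boldsymbol{I}+\boldsymbol{V}_k^{\mathrm{H}}\boldsymbol{H}_k^{\mathrm{H}}\widetilde{\boldsymbol{F}}_k^{-1}\boldsymbol{H}_k\boldsymbol{V}_k\right|.$$ Then for any nonzero $\boldsymbol{V}$ and any nonzero scalar $c$, $g(\boldsymbol{V})=g(c\boldsymbol{V})$, and consequently $\nabla g(\boldsymbol{V})\perp\boldsymbol{V}$ for every nonzero $\boldsymbol{V}$, i.e. $\sum_{k=1}^K\Re\{\mathrm{tr}((\nabla_{\boldsymbol{V}_k} g(\boldsymbol{V}))^{\mathrm{H}}\boldsymbol{V}_k)\}=0$.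
   Context: $|\cdot|$ denotes the determinant, $\|\cdot\|_F$ the Frobenius norm, $\cdot^{\mathrm{H}}$ conjugate transpose. The gradient is taken with respect to the complex matrix variables viewed as real vectors, and orthogonality is with respect to the real inner product $\langle \boldsymbol{A},\boldsymbol{B}\rangle=\Re\{\mathrm{tr}(\boldsymbol{A}^{\mathrm{H}}\boldsymbol{B})\}$. *)

(* Defs.v *)
From mathcomp Require Import all_boot all_algebra.
From mathcomp Require Import reals exp.
From mathcomp.real_closed Require Import complex.
Set Implicit Arguments. Unset Strict Implicit. Unset Printing Implicit Defensive.
Import GRing.Theory Num.Theory.
Local Open Scope ring_scope.

Section Defs.
Variable R : realType.
Local Notation C := R[i].

Definition mxH (m n : nat) (A : 'M[C]_(m, n)) : 'M[C]_(n, m) :=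
  (map_mx (@Num.conj C) A)^T.

Definition frob2 (m n : nat) (A : 'M[C]_(m, n)) : R :=
  \sum_(i < m) \sum_(j < n) (complex.Re (A i j) ^+ 2 + complex.Im (A i j) ^+ 2).

Definition totpow (K M d : nat) (V : 'I_K -> 'M[C]_(M, d)) : R :=
  \sum_(j < K) frob2 (V j).

Definition Ftilde (K M N d : nat) (sigma2 P : R) (H : 'I_K -> 'M[C]_(N, M))
  (V : 'I_K -> 'M[C]_(M, d)) (k : 'I_K) : 'M[C]_N :=
  (real_complex R (sigma2 / P * totpow V))%:M
  + \sum_(j < K | j != k) (H k *m V j *m mxH (V j) *m mxH (H k)).

(* The determinant is of I + (Hermitian PSD), hence real >= 1; we take the
   real part of the (complex-valued) determinant before applying ln. *)
Definition gfun (K M N d : nat) (sigma2 P : R) (w : 'I_K -> R)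
  (H : 'I_K -> 'M[C]_(N, M)) (V : 'I_K -> 'M[C]_(M, d)) : R :=
  \sum_(k < K) w k * ln (complex.Re (\det (1%:M + mxH (V k) *m mxH (H k)
        *m invmx (Ftilde sigma2 P H V k) *m H k *m V k))).

Definition rinner (K M d : nat) (A B : 'I_K -> 'M[C]_(M, d)) : R :=
  \sum_(k < K) complex.Re (\tr (mxH (A k) *m B k)).

(* G is the gradient of f at V (matrices viewed as real vectors, with the
   real inner product rinner): f is Frechet differentiable at V with
   derivative W |-> <G, W>. *)
Definition is_gradient (K M d : nat) (f : ('I_K -> 'M[C]_(M, d)) -> R)
  (V G : 'I_K -> 'M[C]_(M, d)) : Prop :=
  forall eps : R, 0 < eps -> exists delta : R, 0 < delta /\
    forall W : 'I_K -> 'M[C]_(M, d), totpow W < delta ^+ 2 ->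
      `| f (fun k => V k + W k) - f V - rinner G W | <= eps * Num.sqrt (totpow W).

End Defs.

(* Main.v *)
Require Import Defs.
From mathcomp Require Import all_boot all_algebra.
From mathcomp Require Import reals exp.
From mathcomp.real_closed Require Import complex.
From mathcomp Require Import ring lra.
Import GRing.Theory Num.Theory.
From mathcomp Require Import order.
Import Order.TTheory.
Local Open Scope ring_scope.

Section S.
Variable R : realType.
Local Notation C := R[i].
Local Notation "x %:C" := (real_complex R x) (format "x %:C").

Lemma mxHZ m n (c : C) (A : 'M[C]_(m, n)) : mxH (c *: A) = c^* *: mxH A.
Proof. by apply/matrixP=> i j; rewrite !mxE rmorphM. Qed.

Lemma mxHM m n p (A : 'M[C]_(m, n)) (B : 'M[C]_(n, p)) :
  mxH (A *m B) = mxH B *m mxH A.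
Proof.
apply/matrixP=> i j; rewrite !mxE rmorph_sum; apply: eq_bigr => l _.
by rewrite !mxE rmorphM mulrC.
Qed.

Lemma gram n (u : 'rV[C]_n) : (u *m mxH u) 0 0 = \sum_i u 0 i * (u 0 i)^*.
Proof. by rewrite mxE; apply: eq_bigr => i _; rewrite !mxE. Qed.

Lemma gram_ge0 n (u : 'rV[C]_n) : 0 <= (u *m mxH u) 0 0.
Proof. by rewrite gram; apply: sumr_ge0 => i _; apply: mul_conjC_ge0. Qed.

Lemma gram_eq0 n (u : 'rV[C]_n) : (u *m mxH u) 0 0 = 0 -> u = 0.
Proof.
rewrite gram => h; apply/rowP => i; rewrite mxE.
apply/eqP; rewrite -mul_conjC_eq0; apply/eqP.
by apply: (psumr_eq0P _ h) => // l _; apply: mul_conjC_ge0.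
Qed.

Lemma frob2C m n (A : 'M[C]_(m, n)) :
  (frob2 A)%:C = \sum_i \sum_j A i j * (A i j)^*.
Proof.
rewrite /frob2 rmorph_sum; apply: eq_bigr => i _; rewrite rmorph_sum.
by apply: eq_bigr => j _; rewrite -normCK -add_Re2_Im2.
Qed.


Lemma frob2Z m n (c : C) (A : 'M[C]_(m, n)) :
  (frob2 (c *: A))%:C = c * c^* * (frob2 A)%:C.
Proof.
rewrite !frob2C mulr_sumr; apply: eq_bigr => i _; rewrite mulr_sumr.
apply: eq_bigr => j _; rewrite !mxE rmorphM; ring.
Qed.

Lemma totpowZ K M d (c : C) (V : 'I_K -> 'M[C]_(M, d)) :
  (totpow (fun k => c *: V k))%:C = c * c^* * (totpow V)%:C.
Proof.
rewrite /totpow !rmorph_sum mulr_sumr; apply: eq_bigr => j _.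
exact: frob2Z.
Qed.

Lemma FtildeZ K M N d (sigma2 P : R) (H : 'I_K -> 'M[C]_(N, M))
  (V : 'I_K -> 'M[C]_(M, d)) (c : C) k :
  Ftilde sigma2 P H (fun k => c *: V k) k = (c * c^*) *: Ftilde sigma2 P H V k.
Proof.
have e : (sigma2 / P * totpow (fun k => c *: V k))%:C
   = c * c^* * (sigma2 / P * totpow V)%:C.
  rewrite !rmorphM /=. rewrite totpowZ. ring.
rewrite /Ftilde scalerDr scale_scalar_mx e scaler_sumr.
congr (_ + _).
apply: eq_bigr => j _; rewrite mxHZ; do ?[rewrite -scalemxAr | rewrite -scalemxAl]; rewrite !scalerA.
by rewrite (mulrC c^*).
Qed.


Lemma Ftilde_unit K M N d (sigma2 P : R) (H : 'I_K -> 'M[C]_(N, M))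
  (V : 'I_K -> 'M[C]_(M, d)) k :
  0 < sigma2 / P * totpow V -> Ftilde sigma2 P H V k \in unitmx.
Proof.
move=> spos; set s := (sigma2 / P * totpow V)%:C.
have s0 : 0 < s by rewrite ltcR.
have key : forall v : 'rV[C]_N, v *m Ftilde sigma2 P H V k = 0 -> v = 0.
  move=> v hv.
  have : (v *m Ftilde sigma2 P H V k *m mxH v) 0 0 = 0 by rewrite hv mul0mx mxE.
  rewrite /Ftilde mulmxDr mulmxDl mul_mx_scalar -scalemxAl mxE.
  rewrite mulmx_sumr mulmx_suml summxE => h.
  have ge1 : 0 <= (s *: (v *m mxH v)) 0 0 by rewrite mxE; apply: mulr_ge0; [apply: ltW | apply: gram_ge0].
  have ge2 : 0 <= \sum_(j < K | j != k)
      (v *m (H k *m V j *m mxH (V j) *m mxH (H k)) *m mxH v) 0 0.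
    apply: sumr_ge0 => j _.
    have -> : v *m (H k *m V j *m mxH (V j) *m mxH (H k)) *m mxH v
      = (v *m H k *m V j) *m mxH (v *m H k *m V j) by rewrite !mxHM !mulmxA.
    exact: gram_ge0.
  move/eqP: h; rewrite paddr_eq0 // => /andP[/eqP h1 _].
  move/eqP: h1; rewrite mxE mulf_eq0 (gt_eqF s0) /= => /eqP.
  exact: gram_eq0.
rewrite -row_free_unit -kermx_eq0; apply/eqP/row_matrixP => i.
rewrite row0; apply: key.
by rewrite -row_mul mulmx_ker row0.
Qed.


Lemma gfunZ K M N d (sigma2 P : R) (w : 'I_K -> R) (H : 'I_K -> 'M[C]_(N, M))
  (V : 'I_K -> 'M[C]_(M, d)) (c : C) :
  0 < sigma2 / P * totpow V -> c != 0 ->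
  gfun sigma2 P w H V = gfun sigma2 P w H (fun k => c *: V k).
Proof.
move=> spos c0; rewrite /gfun; apply: eq_bigr => k _.
have cc0 : c * c^* != 0 by rewrite mulf_neq0 ?conjC_eq0.
rewrite FtildeZ mxHZ invmxZ; last by rewrite unitmxZ ?unitfE // Ftilde_unit.
do ?[rewrite -scalemxAr | rewrite -scalemxAl]; rewrite !scalerA.
rewrite [X in X *: _](_ : _ = 1) ?scale1r //.
have cj0 : c^* != 0 by rewrite conjC_eq0.
by field; rewrite cj0 c0.
Qed.


Lemma rinnerZ K M d (G V : 'I_K -> 'M[C]_(M, d)) (e : R) :
  rinner G (fun k => e%:C *: V k) = e * rinner G V.
Proof.
rewrite /rinner mulr_sumr; apply: eq_bigr => k _.
rewrite -scalemxAr linearZ /=.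
by case: (\tr _) => a b /=; rewrite !mul0r subr0.
Qed.

Lemma totpowZr K M d (V : 'I_K -> 'M[C]_(M, d)) (e : R) :
  totpow (fun k => e%:C *: V k) = e ^+ 2 * totpow V.
Proof.
apply: complexI; rewrite totpowZ rmorphM /= rmorphXn /=.
rewrite conj_Creal; first by rewrite expr2.
by apply/complex_realP; exists e.
Qed.


End S.

From Stdlib Require Import FunctionalExtensionality.

Theorem lemma1 (R : realType) (K M N d : nat)
  (hK : (0 < K)%N) (hM : (0 < M)%N) (hN : (0 < N)%N) (hd : (0 < d)%N)
  (sigma2 P : R) (hs : 0 < sigma2) (hP : 0 < P)
  (w : 'I_K -> R) (hw : forall k, 0 < w k)
  (H : 'I_K -> 'M[R[i]]_(N, M)) :
  (forall (V : 'I_K -> 'M[R[i]]_(M, d)) (c : R[i]),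
      0 < totpow V -> c != 0 ->
      gfun sigma2 P w H V = gfun sigma2 P w H (fun k => c *: V k))
  /\
  (forall (V G : 'I_K -> 'M[R[i]]_(M, d)),
      0 < totpow V -> is_gradient (gfun sigma2 P w H) V G ->
      rinner G V = 0).
Proof.
have sp : forall V : 'I_K -> 'M[R[i]]_(M, d), 0 < totpow V -> 0 < sigma2 / P * totpow V.
  by move=> V hV; rewrite mulr_gt0 ?divr_gt0.
split; first by move=> V c hV c0; apply: gfunZ => //; apply: sp.
move=> V G hV grad.
set T := totpow V; set r := rinner G V; set q := Num.sqrt T.
have q0 : 0 < q by rewrite sqrtr_gt0.
have qT : T = q ^+ 2 by rewrite sqr_sqrtr // ltW.
have bound : forall eps, 0 < eps -> `|r| <= eps * q.
  move=> eps eps0; have [delta [d0 hdelta]] := grad eps eps0.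
  set e := delta / (q + 1).
  have e0 : 0 < e by rewrite divr_gt0 // addr_gt0.
  have de : delta = e * (q + 1) by rewrite /e mulfVK // gt_eqF // addr_gt0.
  have := hdelta (fun k => (real_complex R e) *: V k).
  rewrite totpowZr rinnerZ -/T -/r.
  have -> : (fun k => V k + real_complex R e *: V k)
      = (fun k => real_complex R (1 + e) *: V k).
    apply: functional_extensionality => k.
    by rewrite rmorphD /= scalerDl scale1r.
  rewrite -gfunZ; last 2 first.
  - exact: sp.
  - apply/eqP => /(congr1 (@complex.Re _)) /= h0.
    by move: (addr_gt0 ltr01 e0); rewrite h0 ltxx.
  rewrite subrr sub0r normrN normrM (gtr0_norm e0) sqrtrM ?sqrtr_sqr ?(gtr0_norm e0); last first.
    by rewrite sqr_ge0.
  rewrite -/q => h.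
  have : e * `|r| <= e * (eps * q).
    apply: le_trans (h _) _.
      by rewrite qT de; nra.
    by rewrite mulrCA.
  by rewrite ler_pM2l.
apply/eqP; rewrite -normr_eq0; apply/eqP/le_anti; rewrite normr_ge0 andbT.
have := bound (`|r| / (2 * q)).
case: (`|r| =P 0) => [-> //|/eqP rn0].
rewrite divr_gt0 ?mulr_gt0 // ?lt_def ?rn0 ?normr_ge0 // => /(_ isT).
rewrite (_ : `|r| / (2 * q) * q = `|r| / 2); last first.
  by field; rewrite gt_eqF.
move=> h; have hr := normr_ge0 r; lra.
Qed.
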